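(* The logic $\mathsf{iCC}\oplus((p\wedge(p\mathrel{\Box\!\!\!\rightarrow} q))\to q)$ of intuitionistic cautious knowledge relative to information is sound and complete with respect to the class of cautious conditional frames that satisfy: if $x\in a$ then $x\in{\uparrow}R_a[x]$, for all worlds $x$ and upsets $a$.
   Context: Formulas: $\phi ::= p\mid\bot\mid\phi\wedge\phi\mid\phi\vee\phi\mid\phi\to\phi\mid\phi\mathrel{\Box\!\!\!\rightarrow}\phi$. $\mathsf{ICK}\oplus\Gamma$ is the smallest set containing intuitionistic propositional logic, $\Gamma$, $(p\mathrel{\Box\!\!\!\rightarrow}(q\wedge r))\leftrightarrow((p\mathrel{\Box\!\!\!\rightarrow} q)\wedge(p\mathrel{\Box\!\!\!\rightarrow} r))$ and $(p\mathrel{\Box\!\!\!\rightarrow}\top)\leftrightarrow\top$, closed under uniform substitution, modus ponens and congruence rules for both arguments of $\mathrel{\Box\!\!\!\rightarrow}$. $\mathsf{iCC}=\mathsf{ICK}\oplus(p\mathrel{\Box\!\!\!\rightarrow} p)\oplus(((p\mathrel{\Box\!\!\!\rightarrow} q)\wedge((p\wedge q)\mathrel{\Box\!\!\!\rightarrow} r))\to(p\mathrel{\Box\!\!\!\rightarrow} r))\oplus(((p\mathrel{\Box\!\!\!\rightarrow} q)\wedge(p\mathrel{\Box\!\!\!\rightarrow} r))\to((p\wedge q)\mathrel{\Box\!\!\!\rightarrow} r))$. A conditional frame is $(X,\leq,\mathcal{R})$, $(X,\leq)$ a nonempty preorder, $\mathcal{R}=\{R_a\mid a\text{ an upset}\}$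 with $(\leq\circ R_a)\subseteq(R_a\circ\leq)$; $x\models\phi\mathrel{\Box\!\!\!\rightarrow}\psi$ iff every $y$ with $xR_{V(\phi)}y$ satisfies $\psi$. A cautious conditional frame satisfies $R_a[x]\subseteq a$ and ($R_a[x]\subseteq b\subseteq a$ implies ${\uparrow}R_a[x]={\uparrow}R_b[x]$) for all $x$ and upsets $a,b$. *)

(* Defs.v *)
Set Implicit Arguments.

Inductive form : Type :=
| Var  : nat -> form
| Bot  : form
| And  : form -> form -> form
| Or   : form -> form -> form
| Imp  : form -> form -> form
| Cond : form -> form -> form.

Definition Top : form := Imp Bot Bot.
Definition Iff (a b : form) : form := And (Imp a b) (Imp b a).

Fixpoint subst (s : nat -> form) (f : form) : form :=
  match f with
  | Var n => s n
  | Bot => Bot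
  | And a b => And (subst s a) (subst s b)
  | Or a b => Or (subst s a) (subst s b)
  | Imp a b => Imp (subst s a) (subst s b)
  | Cond a b => Cond (subst s a) (subst s b)
  end.

Definition p : form := Var 0.
Definition q : form := Var 1.
Definition r : form := Var 2.

Inductive ipc_axiom : form -> Prop :=
| ipc_K   : ipc_axiom (Imp p (Imp q p))
| ipc_S   : ipc_axiom (Imp (Imp p (Imp q r)) (Imp (Imp p q) (Imp p r)))
| ipc_A1  : ipc_axiom (Imp (And p q) p)
| ipc_A2  : ipc_axiom (Imp (And p q) q)
| ipc_AI  : ipc_axiom (Imp p (Imp q (And p q)))
| ipc_O1  : ipc_axiom (Imp p (Or p q))
| ipc_O2  : ipc_axiom (Imp q (Or p q))
| ipc_OE  : ipc_axiom (Imp (Imp p r) (Imp (Imp q r) (Imp (Or p q) r)))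
| ipc_EFQ : ipc_axiom (Imp Bot p).

(** The extra axioms of iCK-with-cautious-knowledge:
    iCC = ICK + (p []-> p) + CM-type axioms, plus (p /\ (p []-> q)) -> q. *)
Inductive ick_axiom : form -> Prop :=
| ick_C  : ick_axiom (Iff (Cond p (And q r)) (And (Cond p q) (Cond p r)))
| ick_N  : ick_axiom (Iff (Cond p Top) Top).

Inductive icc_extra_axiom : form -> Prop :=
| icc_id   : icc_extra_axiom (Cond p p)
| icc_cut  : icc_extra_axiom
               (Imp (And (Cond p q) (Cond (And p q) r)) (Cond p r))
| icc_cm   : icc_extra_axiom
               (Imp (And (Cond p q) (Cond p r)) (Cond (And p q) r))
| icc_mp   : icc_extra_axiom (Imp (And p (Cond p q)) q).

Inductive thm : form -> Prop :=
| thm_ipc   : forall f, ipc_axiom f -> thm f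
| thm_ick   : forall f, ick_axiom f -> thm f
| thm_icc   : forall f, icc_extra_axiom f -> thm f
| thm_subst : forall s f, thm f -> thm (subst s f)
| thm_mp    : forall a b, thm (Imp a b) -> thm a -> thm b
| thm_congl : forall a b c, thm (Iff a b) -> thm (Iff (Cond a c) (Cond b c))
| thm_congr : forall a b c, thm (Iff a b) -> thm (Iff (Cond c a) (Cond c b)).

Definition upset {X : Type} (le : X -> X -> Prop) (a : X -> Prop) : Prop :=
  forall x y, le x y -> a x -> a y.

Definition up {X : Type} (le : X -> X -> Prop) (S : X -> Prop) : X -> Prop :=
  fun y => exists s, S s /\ le s y.

(** The family R is
    given as a function on all predicates, but only its values on upsets
    are ever constrained or used (V(phi) is always an upset). *)
Record cframe : Type := {
  world : Type;
  wle : world -> world -> Prop;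
  wR : (world -> Prop) -> world -> world -> Prop;
  world_nonempty : inhabited world;
  wle_refl : forall x, wle x x;
  wle_trans : forall x y z, wle x y -> wle y z -> wle x z;
  wR_coh : forall a, upset wle a ->
     forall x x' y', wle x x' -> wR a x' y' ->
     exists y, wR a x y /\ wle y y'
}.

Definition valuation (F : cframe) : Type := nat -> world F -> Prop.

Definition persistent_val (F : cframe) (V : valuation F) : Prop :=
  forall n, upset (@wle F) (V n).

Fixpoint sat (F : cframe) (V : valuation F) (x : world F) (f : form) : Prop :=
  match f with
  | Var n => V n x
  | Bot => False
  | And a b => sat V x a /\ sat V x b
  | Or a b => sat V x a \/ sat V x b
  | Imp a b => forall y, wle F x y -> sat V y a -> sat V y b
  | Cond a b => forall y, wR F (fun z => sat V z a) x y -> sat V y b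
  end.

Definition valid (F : cframe) (f : form) : Prop :=
  forall V : valuation F, persistent_val V -> forall x, sat V x f.

Definition cautious (F : cframe) : Prop :=
  (forall a x, upset (wle F) a ->
     forall y, wR F a x y -> a y) /\
  (forall a b x, upset (wle F) a -> upset (wle F) b ->
     (forall y, wR F a x y -> b y) ->
     (forall y, b y -> a y) ->
     forall z, up (wle F) (wR F a x) z <-> up (wle F) (wR F b x) z).

Definition reflexive_cond (F : cframe) : Prop :=
  forall a x, upset (wle F) a -> a x -> up (wle F) (wR F a x) x.

(* Main.v *)
Require Import Defs.
From Stdlib Require Import Classical FunctionalExtensionality PropExtensionality Arith Cantor Lia.

Section Sound.
Variable F : cframe.

Lemma persist (V : valuation F) (hV : persistent_val V) f :
  forall x y, wle F x y -> sat V x f -> sat V y f.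
Proof.
  induction f; simpl; intros x y hxy H.
  - exact (hV n x y hxy H).
  - exact H.
  - destruct H; split; eauto.
  - destruct H; [left|right]; eauto.
  - intros z hyz. apply H. eapply wle_trans; eauto.
  - intros z hz.
    assert (Hup : upset (wle F) (fun z => sat V z f1)) by (intros u v huv; eauto).
    destruct (@wR_coh F _ Hup x y z hxy hz) as [w [hw1 hw2]].
    eapply IHf2; [exact hw2|]. apply H; exact hw1.
Qed.

Lemma sat_subst (V : valuation F) s f : forall x,
  sat V x (subst s f) <-> sat (fun n y => sat V y (s n)) x f.
Proof.
  induction f; simpl; intros x.
  - tauto.
  - tauto.
  - rewrite IHf1, IHf2; tauto.
  - rewrite IHf1, IHf2; tauto.
  - split; intros H y hy; [rewrite <- IHf1, <- IHf2|rewrite IHf1, IHf2]; auto.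
  - assert (E : (fun z => sat V z (subst s f1)) = (fun z => sat (fun n y => sat V y (s n)) z f1)).
    { apply functional_extensionality; intro z; apply propositional_extensionality; apply IHf1. }
    rewrite E. split; intros H y hy; [rewrite <- IHf2|rewrite IHf2]; auto.
Qed.

End Sound.

Lemma soundness f : thm f -> forall F : cframe, cautious F -> reflexive_cond F -> valid F f.
Proof.
  induction 1; intros F [C1 C2] Hr V hV x.
  - destruct H; simpl; intros.
    + eapply hV; eauto.
    + exact (H0 y1 (wle_trans F _ _ _ H1 H3) H4 y1 (wle_refl F y1) (H2 y1 H3 H4)).
    + tauto.
    + tauto.
    + split; [eapply hV; eauto|auto].
    + auto.
    + auto.
    + match goal with h : _ \/ _ |- _ => destruct h end; [eapply H0|eapply H2]; eauto using wle_trans, wle_refl.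
    + contradiction.
  - destruct H; simpl; split; intros; firstorder.
  - assert (Up : forall g, upset (wle F) (fun z => sat V z g))
      by (intros g u v huv; eapply persist; eauto).
    destruct H; simpl; intros.
    + eapply (C1 _ _ (Up p)); eauto.
    + destruct H0 as [Hq Hr'].
      assert (Hb : upset (wle F) (fun z => sat V z p /\ sat V z q))
        by (intros u v huv [h1 h2]; split; eapply persist; eauto).
      assert (E := C2 (fun z => sat V z p) (fun z => sat V z p /\ sat V z q) y (Up p) Hb).
      destruct (E ltac:(intros w hw; split; [eapply (C1 _ _ (Up p)); eauto| apply Hq; exact hw])
                  ltac:(intros w [h _]; exact h) y0) as [E1 _].
      destruct (E1 (ex_intro _ y0 (conj H1 (wle_refl F y0)))) as [s [hs1 hs2]].
      apply (hV 2 s y0 hs2). apply Hr'. exact hs1.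
    + destruct H0 as [Hq Hr'].
      assert (Hb : upset (wle F) (fun z => sat V z p /\ sat V z q))
        by (intros u v huv [h1 h2]; split; eapply persist; eauto).
      assert (E := C2 (fun z => sat V z p) (fun z => sat V z p /\ sat V z q) y (Up p) Hb).
      destruct (E ltac:(intros w hw; split; [eapply (C1 _ _ (Up p)); eauto| apply Hq; exact hw])
                  ltac:(intros w [h _]; exact h) y0) as [_ E1].
      destruct (E1 (ex_intro _ y0 (conj H1 (wle_refl F y0)))) as [s [hs1 hs2]].
      apply (hV 2 s y0 hs2). apply Hr'. exact hs1.
    + destruct H0 as [Hp Hc].
      destruct (Hr _ _ (Up p) Hp) as [s [hs1 hs2]].
      apply (hV 1 s y hs2). apply Hc. exact hs1.
  - apply (proj2 (sat_subst F V s f x)). apply (IHthm F (conj C1 C2) Hr).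
    unfold persistent_val, upset; intros n u v huv. eapply persist; eauto.
  - exact (IHthm1 F (conj C1 C2) Hr V hV x x (wle_refl F x) (IHthm2 F (conj C1 C2) Hr V hV x)).
  - assert (E : (fun z => sat V z a) = (fun z => sat V z b)).
    { apply functional_extensionality; intro z; apply propositional_extensionality.
      destruct (IHthm F (conj C1 C2) Hr V hV z) as [h1 h2].
      split; [apply h1|apply h2]; apply wle_refl. }
    simpl. rewrite E. split; auto.
  - simpl. split; intros y hy Hc w hw.
    + destruct (IHthm F (conj C1 C2) Hr V hV w) as [h1 _].
      apply h1; [apply wle_refl| apply Hc; auto].
    + destruct (IHthm F (conj C1 C2) Hr V hV w) as [_ h1].
      apply h1; [apply wle_refl| apply Hc; auto].
Qed.
Set Implicit Arguments.

Definition sb (A B C : form) : nat -> form :=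
  fun n => match n with 0 => A | 1 => B | _ => C end.

Lemma ax_K A B : thm (Imp A (Imp B A)).
Proof. exact (thm_subst (sb A B Bot) (thm_ipc ipc_K)). Qed.
Lemma ax_S A B C : thm (Imp (Imp A (Imp B C)) (Imp (Imp A B) (Imp A C))).
Proof. exact (thm_subst (sb A B C) (thm_ipc ipc_S)). Qed.
Lemma ax_A1 A B : thm (Imp (And A B) A).
Proof. exact (thm_subst (sb A B Bot) (thm_ipc ipc_A1)). Qed.
Lemma ax_A2 A B : thm (Imp (And A B) B).
Proof. exact (thm_subst (sb A B Bot) (thm_ipc ipc_A2)). Qed.
Lemma ax_AI A B : thm (Imp A (Imp B (And A B))).
Proof. exact (thm_subst (sb A B Bot) (thm_ipc ipc_AI)). Qed.
Lemma ax_O1 A B : thm (Imp A (Or A B)).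
Proof. exact (thm_subst (sb A B Bot) (thm_ipc ipc_O1)). Qed.
Lemma ax_O2 A B : thm (Imp B (Or A B)).
Proof. exact (thm_subst (sb A B Bot) (thm_ipc ipc_O2)). Qed.
Lemma ax_OE A B C : thm (Imp (Imp A C) (Imp (Imp B C) (Imp (Or A B) C))).
Proof. exact (thm_subst (sb A B C) (thm_ipc ipc_OE)). Qed.
Lemma ax_EFQ A : thm (Imp Bot A).
Proof. exact (thm_subst (sb A Bot Bot) (thm_ipc ipc_EFQ)). Qed.
Lemma ax_C A B C : thm (Iff (Cond A (And B C)) (And (Cond A B) (Cond A C))).
Proof. exact (thm_subst (sb A B C) (thm_ick ick_C)). Qed.
Lemma ax_N A : thm (Iff (Cond A Top) Top).
Proof. exact (thm_subst (sb A Bot Bot) (thm_ick ick_N)). Qed.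
Lemma ax_id A : thm (Cond A A).
Proof. exact (thm_subst (sb A Bot Bot) (thm_icc icc_id)). Qed.
Lemma ax_cut A B C : thm (Imp (And (Cond A B) (Cond (And A B) C)) (Cond A C)).
Proof. exact (thm_subst (sb A B C) (thm_icc icc_cut)). Qed.
Lemma ax_cm A B C : thm (Imp (And (Cond A B) (Cond A C)) (Cond (And A B) C)).
Proof. exact (thm_subst (sb A B C) (thm_icc icc_cm)). Qed.
Lemma ax_mp A B : thm (Imp (And A (Cond A B)) B).
Proof. exact (thm_subst (sb A B Bot) (thm_icc icc_mp)). Qed.

Inductive deriv (G : form -> Prop) : form -> Prop :=
| d_thm f : thm f -> deriv G f
| d_hyp f : G f -> deriv G f
| d_mp a b : deriv G (Imp a b) -> deriv G a -> deriv G b.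

Definition ext (G : form -> Prop) (a : form) : form -> Prop := fun x => G x \/ x = a.

Lemma deriv_mono G H f : (forall x, G x -> H x) -> deriv G f -> deriv H f.
Proof. intros h; induction 1; [apply d_thm|apply d_hyp|eapply d_mp]; eauto. Qed.

Lemma thm_I A : thm (Imp A A).
Proof.
  exact (thm_mp (thm_mp (ax_S A (Imp A A) A) (ax_K A (Imp A A))) (ax_K A A)).
Qed.

Lemma ded G a b : deriv (ext G a) b -> deriv G (Imp a b).
Proof.
  induction 1.
  - eapply d_mp; [apply d_thm, ax_K| apply d_thm; auto].
  - destruct H as [H|H].
    + eapply d_mp; [apply d_thm, ax_K| apply d_hyp; auto].
    + subst; apply d_thm, thm_I.
  - eapply d_mp; [eapply d_mp; [apply d_thm, ax_S|exact IHderiv1]|exact IHderiv2].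
Qed.

Lemma deriv0 f : deriv (fun _ => False) f -> thm f.
Proof. induction 1; [auto|contradiction|eapply thm_mp; eauto]. Qed.

Lemma d_ax G f : thm f -> deriv G f.
Proof. apply d_thm. Qed.

Lemma d_mp2 G A B C : thm (Imp A (Imp B C)) -> deriv G A -> deriv G B -> deriv G C.
Proof. intros h ha hb. eapply d_mp; [eapply d_mp; [apply d_thm, h|exact ha]|exact hb]. Qed.
Lemma d_mp1 G A B : thm (Imp A B) -> deriv G A -> deriv G B.
Proof. intros h ha. eapply d_mp; [apply d_thm, h|exact ha]. Qed.

Lemma d_and G A B : deriv G A -> deriv G B -> deriv G (And A B).
Proof. apply d_mp2, ax_AI. Qed.
Lemma d_and1 G A B : deriv G (And A B) -> deriv G A.
Proof. apply d_mp1, ax_A1. Qed.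
Lemma d_and2 G A B : deriv G (And A B) -> deriv G B.
Proof. apply d_mp1, ax_A2. Qed.

Lemma hyp_a G a : deriv (ext G a) a.
Proof. apply d_hyp; right; reflexivity. Qed.
Lemma lift G a f : deriv G f -> deriv (ext G a) f.
Proof. apply deriv_mono; intros x h; left; exact h. Qed.

Definition emp : form -> Prop := fun _ => False.

Lemma thm_iff_and A B : thm (Imp A B) -> thm (Iff A (And A B)).
Proof.
  intros h. apply deriv0. apply d_and.
  - apply ded. apply d_and; [apply hyp_a|]. eapply d_mp1; [exact h|apply hyp_a].
  - apply d_thm, ax_A1.
Qed.

Lemma thm_and_comm A B : thm (Imp (And A B) (And B A)).
Proof.
  apply deriv0, ded. apply d_and; [eapply d_and2|eapply d_and1]; apply hyp_a.
Qed.

Lemma thm_iff_comm A B : thm (Iff (And A B) (And B A)).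
Proof. apply deriv0, d_and; apply d_thm, thm_and_comm. Qed.

Lemma thm_iff_top A : thm A -> thm (Iff A Top).
Proof.
  intros h. apply deriv0, d_and.
  - eapply d_mp1; [apply ax_K|apply d_thm, thm_I].
  - eapply d_mp1; [apply ax_K|apply d_thm, h].
Qed.

Lemma thm_and1 A B : thm (And A B) -> thm A.
Proof. intros h; exact (thm_mp (ax_A1 A B) h). Qed.
Lemma thm_and2 A B : thm (And A B) -> thm B.
Proof. intros h; exact (thm_mp (ax_A2 A B) h). Qed.

Lemma thm_trans A B C : thm (Imp A B) -> thm (Imp B C) -> thm (Imp A C).
Proof.
  intros h1 h2. apply deriv0, ded. eapply d_mp1; [exact h2|]. eapply d_mp1; [exact h1|apply hyp_a].
Qed.

Lemma cond_mono A B C : thm (Imp B C) -> thm (Imp (Cond A B) (Cond A C)).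
Proof.
  intros h.
  assert (h1 := thm_and1 (thm_congr A (thm_iff_and h))).
  eapply thm_trans; [exact h1|].
  eapply thm_trans; [apply (thm_and1 (ax_C A B C))|apply ax_A2].
Qed.

Lemma cond_thm A B : thm B -> thm (Cond A B).
Proof.
  intros h. eapply thm_mp; [apply cond_mono; apply (thm_mp (ax_K B Top) h)|].
  exact (thm_mp (thm_and2 (ax_N A)) (thm_I Bot)).
Qed.

Definition closed (G : form -> Prop) := forall f, deriv G f -> G f.

Lemma cl_mp1 G A B : closed G -> thm (Imp A B) -> G A -> G B.
Proof. intros c h a. apply c. eapply d_mp1; [exact h|apply d_hyp, a]. Qed.
Lemma cl_and G A B : closed G -> G A -> G B -> G (And A B).
Proof. intros c a b. apply c. apply d_and; apply d_hyp; auto. Qed.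

Definition subc (G : form -> Prop) (phi : form) : form -> Prop := fun x => G (Cond phi x).

Lemma sub_deriv G phi : closed G -> forall psi, deriv (subc G phi) psi -> G (Cond phi psi).
Proof.
  intros c. induction 1.
  - apply c, d_thm, cond_thm, H.
  - exact H.
  - assert (h : G (Cond phi (And (Imp a b) a))).
    { eapply cl_mp1; [exact c|apply (thm_and2 (ax_C _ _ _))|]. apply cl_and; auto. }
    eapply cl_mp1; [exact c| |exact h]. apply cond_mono.
    apply deriv0, ded. eapply d_mp; [eapply d_and1|eapply d_and2]; apply hyp_a.
Qed.

Lemma well_def G A B C : closed G -> G (Cond A B) -> G (Cond B A) -> G (Cond A C) -> G (Cond B C).
Proof.
  intros c hab hba hac.
  assert (h1 : G (Cond (And A B) C)).
  { eapply cl_mp1; [exact c|apply ax_cm|]. apply cl_and; auto. }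
  assert (h2 : G (Cond (And B A) C)).
  { eapply cl_mp1; [exact c| |exact h1]. exact (thm_and1 (thm_congl C (thm_iff_comm A B))). }
  exact (@cl_mp1 G _ _ c (ax_cut B A C) (@cl_and G _ _ c hba h2)).
Qed.

Definition ptheory (G : form -> Prop) : Prop :=
  closed G /\ ~ G Bot /\ (forall a b, G (Or a b) -> G a \/ G b).

Fixpoint dec (k n : nat) : form :=
  match k with
  | 0 => Bot
  | S k =>
    let '(t, m) := Cantor.of_nat n in
    let '(a, b) := Cantor.of_nat m in
    match t with
    | 0 => Var m
    | 1 => Bot
    | 2 => And (dec k a) (dec k b)
    | 3 => Or (dec k a) (dec k b)
    | 4 => Imp (dec k a) (dec k b)
    | _ => Cond (dec k a) (dec k b)
    end
  end.

Fixpoint enc (f : form) : nat :=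
  match f with
  | Var n => Cantor.to_nat (0, n)
  | Bot => Cantor.to_nat (1, 0)
  | And a b => Cantor.to_nat (2, Cantor.to_nat (enc a, enc b))
  | Or a b => Cantor.to_nat (3, Cantor.to_nat (enc a, enc b))
  | Imp a b => Cantor.to_nat (4, Cantor.to_nat (enc a, enc b))
  | Cond a b => Cantor.to_nat (5, Cantor.to_nat (enc a, enc b))
  end.

Fixpoint depth (f : form) : nat :=
  match f with
  | Var _ | Bot => 1
  | And a b | Or a b | Imp a b | Cond a b => S (Nat.max (depth a) (depth b))
  end.

Lemma dec_enc f : forall k, depth f <= k -> dec k (enc f) = f.
Proof.
  induction f; intros k hk; destruct k as [|k]; simpl in hk; try lia; cbn [dec enc];
    rewrite !Cantor.cancel_of_to; cbv beta iota.
  - destruct (Cantor.of_nat n); reflexivity.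
  - destruct (Cantor.of_nat 0); reflexivity.
  - rewrite IHf1, IHf2 by lia; reflexivity.
  - rewrite IHf1, IHf2 by lia; reflexivity.
  - rewrite IHf1, IHf2 by lia; reflexivity.
  - rewrite IHf1, IHf2 by lia; reflexivity.
Qed.

Definition enum (m : nat) : form := let '(k, n) := Cantor.of_nat m in dec k n.

Lemma enum_surj f : exists m, enum m = f.
Proof.
  exists (Cantor.to_nat (depth f, enc f)). unfold enum.
  rewrite Cantor.cancel_of_to. apply dec_enc; lia.
Qed.

Section Lind.
Variable G : form -> Prop.
Variable psi : form.
Hypothesis hG : ~ deriv G psi.

Fixpoint chain (n : nat) : form -> Prop :=
  match n with
  | 0 => G
  | S n => fun x => chain n x \/ (x = enum n /\ ~ deriv (ext (chain n) (enum n)) psi)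
  end.

Lemma chain_mono n m : n <= m -> forall x, chain n x -> chain m x.
Proof. induction 1; simpl; auto. Qed.

Definition D : form -> Prop := fun x => exists n, chain n x.

Lemma D_compact f : deriv D f -> exists n, deriv (chain n) f.
Proof.
  induction 1.
  - exists 0; apply d_thm; auto.
  - destruct H as [n h]; exists n; apply d_hyp; auto.
  - destruct IHderiv1 as [n1 h1], IHderiv2 as [n2 h2].
    exists (Nat.max n1 n2). eapply d_mp.
    + eapply deriv_mono; [|exact h1]. apply chain_mono; lia.
    + eapply deriv_mono; [|exact h2]. apply chain_mono; lia.
Qed.

Lemma chain_ok n : ~ deriv (chain n) psi.
Proof.
  induction n; simpl; auto.
  intros h. destruct (classic (deriv (ext (chain n) (enum n)) psi)) as [H|H].
  - apply IHn. eapply deriv_mono; [|exact h]. intros x [hx|[_ hx]]; tauto.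
  - apply H. eapply deriv_mono; [|exact h]. intros x [hx|[hx _]]; [left|right]; auto.
Qed.

Lemma D_ok : ~ deriv D psi.
Proof. intros h. destruct (D_compact h) as [n hn]. exact (chain_ok n hn). Qed.

Lemma D_max f : ~ D f -> deriv (ext D f) psi.
Proof.
  intros h. destruct (enum_surj f) as [n hn].
  apply NNPP; intros h2. apply h. exists (S n). simpl. right. split; [auto|].
  intros h3. apply h2. eapply deriv_mono; [|exact h3].
  intros x [hx|hx]; [left; exists n; auto|right; congruence].
Qed.

Lemma D_sub x : G x -> D x.
Proof. intros h; exists 0; exact h. Qed.

Lemma D_closed : closed D.
Proof.
  intros f h. apply NNPP; intros hf. apply D_ok.
  eapply d_mp; [apply ded, D_max, hf|exact h].
Qed.

Lemma D_ptheory : ptheory D.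
Proof.
  split; [exact D_closed|split].
  - intros h. apply D_ok. eapply d_mp1; [apply ax_EFQ|apply d_hyp, h].
  - intros a b h. apply NNPP; intros hn. apply D_ok.
    eapply d_mp; [eapply d_mp2; [apply ax_OE| apply ded, D_max| apply ded, D_max]|apply d_hyp, h];
      intro; apply hn; auto.
Qed.
End Lind.

Definition W := { G : form -> Prop | ptheory G }.

Lemma lind G psi : ~ deriv G psi -> exists Dl : W, (forall x, G x -> proj1_sig Dl x) /\ ~ proj1_sig Dl psi.
Proof.
  intros h. exists (exist _ (D G psi) (D_ptheory h)). simpl. split.
  - apply D_sub.
  - intros h2. apply (D_ok h). apply d_hyp, h2.
Qed.

Notation "` G" := (proj1_sig G) (at level 1).

Definition wsub (G H : W) : Prop := forall x, `G x -> `H x.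

Lemma W_closed (G : W) : closed (`G).
Proof. exact (proj1 (proj2_sig G)). Qed.
Lemma W_cons (G : W) : ~ `G Bot.
Proof. exact (proj1 (proj2 (proj2_sig G))). Qed.
Lemma W_prime (G : W) a b : `G (Or a b) -> `G a \/ `G b.
Proof. exact (proj2 (proj2 (proj2_sig G)) a b). Qed.

Definition Wt (a : W -> Prop) (G : W) (phi : form) : Prop :=
  (forall D : W, (forall x, subc (`G) phi x -> `D x) -> a D) /\
  (forall D : W, a D -> `D phi).

Definition cR (a : W -> Prop) (G D : W) : Prop :=
  (exists phi, Wt a G phi /\ forall x, subc (`G) phi x -> `D x) \/
  ((~ exists phi, Wt a G phi) /\ a D).

Lemma sub_all (G : W) phi chi :
  (forall D : W, (forall x, subc (`G) phi x -> `D x) -> `D chi) -> `G (Cond phi chi).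
Proof.
  intros h. apply NNPP; intros hn.
  assert (hd : ~ deriv (subc (`G) phi) chi).
  { intros hd. apply hn. apply sub_deriv; auto. apply W_closed. }
  destruct (lind hd) as [D [h1 h2]]. apply h2, h, h1.
Qed.

Lemma Wt_sub a G phi psi : Wt a G phi -> Wt a G psi -> forall x, subc (`G) phi x -> subc (`G) psi x.
Proof.
  intros [h1 h2] [k1 k2] x hx.
  assert (e1 : `G (Cond phi psi)) by (apply sub_all; intros D hD; apply k2, h1, hD).
  assert (e2 : `G (Cond psi phi)) by (apply sub_all; intros D hD; apply h2, k1, hD).
  unfold subc in *. eapply well_def; eauto. apply W_closed.
Qed.

Lemma cR_type1 a G phi : Wt a G phi -> forall D, cR a G D <-> (forall x, subc (`G) phi x -> `D x).
Proof.
  intros hw D. split.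
  - intros [[psi [hp hD]]|[hn _]].
    + intros x hx. apply hD. exact (Wt_sub hw hp x hx).
    + exfalso; apply hn; exists phi; exact hw.
  - intros h. left. exists phi; auto.
Qed.

Lemma Wt_up a (G G' : W) phi : wsub G G' -> Wt a G phi -> Wt a G' phi.
Proof.
  intros hs [h1 h2]. split; auto.
  intros D hD. apply h1. intros x hx. apply hD. apply hs, hx.
Qed.

Lemma cR_in a G D : cR a G D -> a D.
Proof. intros [[phi [[h1 _] hD]]|[_ h]]; auto. Qed.

Lemma wsub_refl G : wsub G G.
Proof. intros x h; exact h. Qed.
Lemma wsub_trans G H K : wsub G H -> wsub H K -> wsub G K.
Proof. unfold wsub; auto. Qed.

Lemma cR_coh a (x x' y' : W) : wsub x x' -> cR a x' y' -> exists y, cR a x y /\ wsub y y'.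
Proof.
  intros hs hr. exists y'. split; [|apply wsub_refl].
  destruct (classic (exists phi, Wt a x phi)) as [[phi hw]|hn].
  - apply (cR_type1 hw). intros z hz.
    apply (proj1 (cR_type1 (Wt_up hs hw) y') hr). unfold subc in *. apply hs, hz.
  - right; split; auto. eapply cR_in; eauto.
Qed.

Definition canon (h : inhabited W) : cframe :=
  @Build_cframe W wsub cR h wsub_refl wsub_trans (fun a _ => @cR_coh a).

Definition Vc (h : inhabited W) : valuation (canon h) := fun n (G : W) => `G (Var n).

Lemma truth (h : inhabited W) f : forall G : W, sat (@Vc h) G f <-> `G f.
Proof.
  induction f; intros G; simpl.
  - unfold Vc; tauto.
  - split; [tauto|apply W_cons].
  - rewrite IHf1, IHf2. split.
    + intros [a b]. apply (@cl_and (`G) _ _ (W_closed G) a b).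
    + intros hab. split; apply (W_closed G); [eapply d_and1|eapply d_and2]; apply d_hyp, hab.
  - rewrite IHf1, IHf2. split.
    + intros [a|a]; apply (W_closed G); [eapply d_mp1; [apply ax_O1|]|eapply d_mp1; [apply ax_O2|]];
        apply d_hyp, a.
    + apply W_prime.
  - split.
    + intros H. apply NNPP; intros hn.
      assert (hd : ~ deriv (ext (`G) f1) f2).
      { intros hd. apply hn, (W_closed G), ded, hd. }
      destruct (lind hd) as [D [h1 h2]]. apply h2, IHf2, H.
      * intros x hx; apply h1; left; exact hx.
      * apply IHf1, h1; right; reflexivity.
    + intros hi D hs ha. apply IHf2. apply IHf1 in ha.
      apply (W_closed D). eapply d_mp; apply d_hyp; [apply hs, hi|exact ha].
  - assert (hw : forall G : W, Wt (fun z => sat (@Vc h) z f1) G f1).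
    { intros G0; split.
      - intros D hD. apply IHf1. apply hD. apply (W_closed G0), d_thm, ax_id.
      - intros D hD. apply IHf1, hD. }
    split.
    + intros H. apply NNPP; intros hn.
      assert (hd : ~ deriv (subc (`G) f1) f2).
      { intros hd. apply hn. apply sub_deriv; auto. apply W_closed. }
      destruct (lind hd) as [D [h1 h2]]. apply h2, IHf2, H.
      apply (cR_type1 (hw G)). exact h1.
    + intros hc D hr. apply IHf2. apply (proj1 (cR_type1 (hw G) D) hr). exact hc.
Qed.

Lemma canon_cautious h : cautious (canon h).
Proof.
  split.
  - intros a x _ y hy. exact (cR_in hy).
  - intros a b x _ _ hab hba.
    assert (E : forall D, cR a x D <-> cR b x D).
    { destruct (classic (exists phi, Wt a x phi)) as [[phi hw]|hn].
      - assert (hwb : Wt b x phi).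
        { split.
          + intros D hD. apply hab. left. exists phi; auto.
          + intros D hD. apply (proj2 hw), hba, hD. }
        intros D. rewrite (cR_type1 hw), (cR_type1 hwb). tauto.
      - assert (hnb : ~ exists phi, Wt b x phi).
        { intros [phi [k1 k2]]. apply hn. exists phi. split.
          - intros D hD. apply hba, k1, hD.
          - intros D hD. apply k2, hab. right; auto. }
        intros D. split.
        + intros hr. right. split; [exact hnb|apply hab, hr].
        + intros hr. right. split; [exact hn|apply hba; exact (cR_in hr)]. }
    intros z. unfold up. simpl. split; intros [s [hs1 hs2]]; exists s; split; auto; apply E; auto.
Qed.

Lemma canon_refl h : reflexive_cond (canon h).
Proof.
  intros a x _ hx. exists x. split; [|apply wsub_refl]. simpl.
  destruct (classic (exists phi, Wt a x phi)) as [[phi hw]|hn].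
  - left. exists phi. split; auto. intros y hy.
    apply (W_closed x). eapply d_mp1; [apply ax_mp|]. apply d_and; apply d_hyp.
    + apply (proj2 hw), hx.
    + exact hy.
  - right; auto.
Qed.

Lemma completeness f : (forall F : cframe, cautious F -> reflexive_cond F -> valid F f) -> thm f.
Proof.
  intros H. apply NNPP; intros hn.
  assert (hd : ~ deriv emp f) by (intros hd; apply hn, deriv0, hd).
  destruct (lind hd) as [G0 [_ h2]].
  set (h := inhabits G0).
  apply h2. apply (proj1 (@truth h f G0)). apply (H (canon h) (@canon_cautious h) (@canon_refl h)).
  intros n u v huv hu. apply huv, hu.
Qed.

Theorem theorem6p10 : forall f : form,
  thm f <-> (forall F : cframe, cautious F -> reflexive_cond F -> valid F f).
Proof.
  intros f. split; [apply soundness|apply completeness].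
Qed.
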